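(* Let $0<\eta<\eta'<1/4$, $\lambda=\mathrm{e}^{-1}+\eta$, $\ell=\lfloor1/\eta'\rfloor$, and $0<\delta_0<1$. Then there exists a positive integer $n_s=n_s(\delta_0,\eta')$ such that for all $n\ge n_s$ and all $\delta\ge\delta_0$ with $\delta n$ a positive integer, and every path $\pi$ of length $\delta n$ in $\mathcal W_n$, $$\mathbb{P}\big(E^\pi_{\eta',n}\,\big|\,A(\pi)\le\lambda\big)\le 2n\,\mathrm{e}^{-\delta n\eta'/16},$$ where $E^\pi_{\eta',n}$ is the event that $\Lambda_k>\lambda+\sqrt{\eta'}$ for some integer $1\le k\le\delta n/(2\ell)$.
   Context: $\mathcal W_n$ is the complete graph on $n$ vertices whose edges carry i.i.d. exponential weights with mean $n$; $A(\pi)$ denotes the average edge weight of a path $\pi$. For a path $\pi$ of length $\delta n$ let $X_1,\dots,X_{\delta n}$ be its successive edge weights, $S_k=\sum_{i=1}^kX_i$, and $\Lambda_k=(S_{\delta n}-S_{(k-1)\ell})/(\delta n-(k-1)\ell)$. *)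

(* Defs.v *)
From Stdlib Require Import Reals Lra Lia.
Open Scope R_scope.

Record is_prob_space {Omega : Type} (F : (Omega -> Prop) -> Prop)
    (P : (Omega -> Prop) -> R) : Prop := {
  ps_full : F (fun _ => True);
  ps_compl : forall A, F A -> F (fun w => ~ A w);
  ps_union : forall A : nat -> Omega -> Prop,
      (forall k, F (A k)) -> F (fun w => exists k, A k w);
  ps_nonneg : forall A, F A -> 0 <= P A;
  ps_one : P (fun _ => True) = 1;
  ps_sigma_add : forall A : nat -> Omega -> Prop,
      (forall k, F (A k)) ->
      (forall i j w, i <> j -> A i w -> A j w -> False) ->
      infinite_sum (fun k => P (A k)) (P (fun w => exists k, A k w))
}.

Fixpoint prodR (k : nat) (f : nat -> R) : R :=
  match k with O => 1 | S k' => prodR k' f * f k' end.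
Fixpoint sumR (k : nat) (f : nat -> R) : R :=
  match k with O => 0 | S k' => sumR k' f + f k' end.

(* W i j (for i < j < n) is the weight of the edge {i,j} of the complete
   graph on the vertex set {0,...,n-1}. *)
Definition edge_weight {Omega : Type} (W : nat -> nat -> Omega -> R)
    (i j : nat) : Omega -> R :=
  if Nat.ltb i j then W i j else W j i.

(* W_n: the edge weights are measurable, i.i.d. exponential with mean n:
   for any finitely many distinct edges {e1 a, e2 a} (a < k) and thresholds
   t a >= 0, P(W_{e_a} <= t a for all a < k) = prod_a (1 - exp(-t a / n)). *)
Definition iid_exp_weights {Omega : Type} (n : nat)
    (F : (Omega -> Prop) -> Prop) (P : (Omega -> Prop) -> R)
    (W : nat -> nat -> Omega -> R) : Prop :=
  (forall i j t, (i < j < n)%nat -> F (fun w => W i j w <= t)) /\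
  (forall (k : nat) (e1 e2 : nat -> nat) (t : nat -> R),
     (forall a, (a < k)%nat -> (e1 a < e2 a < n)%nat /\ 0 <= t a) ->
     (forall a b, (a < k)%nat -> (b < k)%nat ->
        e1 a = e1 b -> e2 a = e2 b -> a = b) ->
     P (fun w => forall a, (a < k)%nat -> W (e1 a) (e2 a) w <= t a)
     = prodR k (fun a => 1 - exp (- t a / INR n))).

(* v 0, v 1, ..., v m is a path of length m (m edges) in K_n:
   distinct vertices of {0,...,n-1}. *)
Definition is_path (n m : nat) (v : nat -> nat) : Prop :=
  (forall i, (i <= m)%nat -> (v i < n)%nat) /\
  (forall i j, (i <= m)%nat -> (j <= m)%nat -> v i = v j -> i = j).

(* S_k = X_1 + ... + X_k where X_i = weight of the i-th edge {v(i-1), v i} *)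
Definition path_S {Omega : Type} (W : nat -> nat -> Omega -> R)
    (v : nat -> nat) (k : nat) (w : Omega) : R :=
  sumR k (fun i => edge_weight W (v i) (v (S i)) w).

Definition path_A {Omega : Type} (W : nat -> nat -> Omega -> R)
    (v : nat -> nat) (m : nat) (w : Omega) : R :=
  path_S W v m w / INR m.

Definition Lambda {Omega : Type} (W : nat -> nat -> Omega -> R)
    (v : nat -> nat) (m l k : nat) (w : Omega) : R :=
  (path_S W v m w - path_S W v ((k - 1) * l) w) / (INR m - INR ((k - 1) * l)).

(* E^pi_{eta',n}: Lambda_k > lambda + sqrt eta' for some integer
   1 <= k <= m / (2 l)  (here m = delta n) *)
Definition event_E {Omega : Type} (W : nat -> nat -> Omega -> R)
    (v : nat -> nat) (m l : nat) (lam eta' : R) (w : Omega) : Prop :=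
  exists k : nat, (1 <= k)%nat /\ INR k <= INR m / (2 * INR l) /\
    Lambda W v m l k w > lam + sqrt eta'.

(* Main.v *)
Require Import Defs.
From Stdlib Require Import Reals.
From Stdlib Require Import Lra Lia ZArith Classical FunctionalExtensionality PropExtensionality.
Open Scope R_scope.


Lemma pred_ext {Omega : Type} (A B : Omega -> Prop) :
  (forall w, A w <-> B w) -> A = B.
Proof. intro H; apply functional_extensionality; intro w; apply propositional_extensionality; auto. Qed.

Lemma P_ext {Omega : Type} (P : (Omega -> Prop) -> R) (A B : Omega -> Prop) :
  (forall w, A w <-> B w) -> P A = P B.
Proof. intro H; rewrite (pred_ext A B H); auto. Qed.

Lemma F_ext {Omega : Type} (F : (Omega -> Prop) -> Prop) (A B : Omega -> Prop) :
  (forall w, A w <-> B w) -> F A -> F B.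
Proof. intros H; rewrite (pred_ext A B H); auto. Qed.


Lemma F_false {Omega} F P (HP : @is_prob_space Omega F P) : F (fun _ => False).
Proof.
  apply (F_ext F (fun w => ~ True)); [tauto|]. apply (ps_compl F P HP). apply (ps_full F P HP).
Qed.

Lemma F_or {Omega} F P (HP : @is_prob_space Omega F P) A B :
  F A -> F B -> F (fun w => A w \/ B w).
Proof.
  intros HA HB.
  apply (F_ext F (fun w => exists k, (fun k => match k with O => A | _ => B end) k w)).
  - intro w; split.
    + intros [[|k] H]; auto.
    + intros [H|H]; [exists O|exists 1%nat]; auto.
  - apply (ps_union F P HP). intros [|k]; auto.
Qed.

Lemma F_not {Omega} F P (HP : @is_prob_space Omega F P) A : F A -> F (fun w => ~ A w).
Proof. apply (ps_compl F P HP). Qed.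

Lemma F_and {Omega} F P (HP : @is_prob_space Omega F P) A B :
  F A -> F B -> F (fun w => A w /\ B w).
Proof.
  intros HA HB.
  apply (F_ext F (fun w => ~ (~ A w \/ ~ B w))).
  - intro w; tauto.
  - apply (F_not F P HP). apply (F_or F P HP); apply (F_not F P HP); auto.
Qed.

Lemma F_const {Omega} F P (HP : @is_prob_space Omega F P) (C : Prop) : F (fun _ : Omega => C).
Proof.
  destruct (classic C) as [H|H].
  - apply (F_ext F (fun _ => True)); [tauto|apply (ps_full F P HP)].
  - apply (F_ext F (fun _ => False)); [tauto|apply (F_false F P HP)].
Qed.

Lemma F_imp_const {Omega} F P (HP : @is_prob_space Omega F P) (C : Prop) A :
  F A -> F (fun w => C -> A w).
Proof.
  intro HA. destruct (classic C) as [H|H].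
  - apply (F_ext F A); [tauto|auto].
  - apply (F_ext F (fun _ => True)); [tauto|apply (ps_full F P HP)].
Qed.

Lemma F_and_const {Omega} F P (HP : @is_prob_space Omega F P) (C : Prop) A :
  F A -> F (fun w => C /\ A w).
Proof. intro; apply (F_and F P HP); auto. apply (F_const F P HP). Qed.

Lemma F_forall_lt {Omega} F P (HP : @is_prob_space Omega F P) (A : nat -> Omega -> Prop) k :
  (forall a, (a < k)%nat -> F (A a)) -> F (fun w => forall a, (a < k)%nat -> A a w).
Proof.
  induction k; intro H.
  - apply (F_ext F (fun _ => True)); [intro; split; intros; try lia; auto|apply (ps_full F P HP)].
  - apply (F_ext F (fun w => (forall a, (a < k)%nat -> A a w) /\ A k w)).
    + intro w; split.
      * intros [H1 H2] a Ha. destruct (Nat.eq_dec a k); [subst; auto|apply H1; lia].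
      * intro H1; split; auto.
    + apply (F_and F P HP); auto.
Qed.

Lemma F_exists {Omega} F P (HP : @is_prob_space Omega F P) (A : nat -> Omega -> Prop) :
  (forall a, F (A a)) -> F (fun w => exists a, A a w).
Proof. apply (ps_union F P HP). Qed.

Lemma P_false {Omega} F P (HP : @is_prob_space Omega F P) : P (fun _ => False) = 0.
Proof.
  pose proof (ps_sigma_add F P HP (fun _ => fun _ => False)) as H.
  assert (Hs : infinite_sum (fun _ : nat => P (fun _ : Omega => False)) (P (fun _ => False))).
  { assert (E : P (fun w => exists _ : nat, False) = P (fun _ => False)).
    { apply P_ext; intro w; split; [intros [_ X]; auto|tauto]. }
    pose proof H as H'. cbv beta in H'. rewrite E in H'. apply H'; [intros; apply (F_false F P HP)|tauto]. }
  set (c := P (fun _ => False)) in *.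
  assert (Hc : 0 <= c) by (apply (ps_nonneg F P HP), (F_false F P HP)).
  destruct (Req_dec c 0) as [E|E]; auto.
  destruct (Hs c) as [N HN]; [lra|].
  specialize (HN (S (S N)) ltac:(lia)).
  assert (sum_f_R0 (fun _ => c) (S (S N)) = INR (S (S (S N))) * c).
  { clear HN. induction (S (S N)); simpl; [lra|]. rewrite IHn. simpl. destruct n; simpl; lra. }
  rewrite H0 in HN. unfold R_dist in HN. rewrite !S_INR in HN.
  pose proof (pos_INR N). rewrite Rabs_right in HN; nra.
Qed.

Lemma P_nonneg {Omega} F P (HP : @is_prob_space Omega F P) A : F A -> 0 <= P A.
Proof. apply (ps_nonneg F P HP). Qed.

Lemma P_add2 {Omega} F P (HP : @is_prob_space Omega F P) A B :
  F A -> F B -> (forall w, A w -> B w -> False) ->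
  P (fun w => A w \/ B w) = P A + P B.
Proof.
  intros HA HB D.
  set (S := fun k : nat => match k with O => A | 1%nat => B | _ => fun _ : Omega => False end).
  pose proof (ps_sigma_add F P HP S) as H.
  assert (H1 : infinite_sum (fun k => P (S k)) (P (fun w => exists k, S k w))).
  { apply H.
    - intros [|[|k]]; simpl; auto. apply (F_false F P HP).
    - intros [|[|i]] [|[|j]] w Hij; simpl; try tauto; try lia; eauto. }
  assert (H2 : infinite_sum (fun k => P (S k)) (P A + P B)).
  { intros e He. exists 1%nat. intros n Hn.
    assert (sum_f_R0 (fun k => P (S k)) n = P A + P B).
    { induction n; [lia|]. destruct n; simpl; [auto|].
      simpl in IHn. rewrite IHn by lia. simpl. rewrite (P_false F P HP). ring. }
    rewrite H0. unfold R_dist. rewrite Rminus_diag, Rabs_R0; auto. }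
  rewrite (uniqueness_sum _ _ _ H2 H1).
  apply P_ext. intro w; split.
  - intros [X|X]; [exists O|exists 1%nat]; auto.
  - intros [[|[|k]] X]; simpl in X; tauto.
Qed.

Lemma P_split {Omega} F P (HP : @is_prob_space Omega F P) A B :
  F A -> F B -> P A = P (fun w => A w /\ B w) + P (fun w => A w /\ ~ B w).
Proof.
  intros HA HB. rewrite <- (P_add2 F P HP).
  - apply P_ext; intro w; tauto.
  - apply (F_and F P HP); auto.
  - apply (F_and F P HP); auto; apply (F_not F P HP); auto.
  - intros w; tauto.
Qed.

Lemma P_mono {Omega} F P (HP : @is_prob_space Omega F P) A B :
  F A -> F B -> (forall w, A w -> B w) -> P A <= P B.
Proof.
  intros HA HB H. rewrite (P_split F P HP B A HB HA).
  replace (P (fun w => B w /\ A w)) with (P A) by (apply P_ext; intro w; split; auto; tauto).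
  assert (HH: F (fun w => B w /\ ~ A w)) by (apply (F_and F P HP); auto; apply (F_not F P HP); auto).
  pose proof (P_nonneg F P HP _ HH).
  lra.
Qed.

Lemma P_subadd2 {Omega} F P (HP : @is_prob_space Omega F P) A B :
  F A -> F B -> P (fun w => A w \/ B w) <= P A + P B.
Proof.
  intros HA HB.
  assert (HBA : F (fun w => B w /\ ~ A w)) by (apply (F_and F P HP); auto; apply (F_not F P HP); auto).
  replace (P (fun w => A w \/ B w)) with (P (fun w => A w \/ (B w /\ ~ A w))).
  - rewrite (P_add2 F P HP); auto; [|intros w; tauto].
    pose proof (P_mono F P HP _ _ HBA HB (fun w H => proj1 H)). lra.
  - apply P_ext; intro w; tauto.
Qed.

Lemma P_union_le {Omega} F P (HP : @is_prob_space Omega F P) (B : nat -> Omega -> Prop) L :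
  (forall l, F (B l)) ->
  P (fun w => exists l, (l < L)%nat /\ B l w) <= sumR L (fun l => P (B l)).
Proof.
  intro HB. induction L; simpl.
  - rewrite <- (P_false F P HP). right; apply P_ext; intro w; split; [intros [l [Hl _]]; lia|tauto].
  - assert (HF : forall L, F (fun w => exists l, (l < L)%nat /\ B l w)).
    { intro L'. apply (F_exists F P HP). intro a. apply (F_and_const F P HP); auto. }
    replace (P (fun w => exists l, (l < S L)%nat /\ B l w))
      with (P (fun w => (exists l, (l < L)%nat /\ B l w) \/ B L w)).
    + pose proof (P_subadd2 F P HP _ _ (HF L) (HB L)). lra.
    + apply P_ext; intro w; split.
      * intros [[l [Hl X]]|X]; [exists l; split; auto; lia|exists L; auto].
      * intros [l [Hl X]]. destruct (Nat.eq_dec l L); [subst; right; auto|left; exists l; split; auto; lia].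
Qed.

Lemma P_union_eq {Omega} F P (HP : @is_prob_space Omega F P) (B : nat -> Omega -> Prop) L :
  (forall l, F (B l)) -> (forall i j w, i <> j -> B i w -> B j w -> False) ->
  P (fun w => exists l, (l < L)%nat /\ B l w) = sumR L (fun l => P (B l)).
Proof.
  intros HB D. induction L; simpl.
  - rewrite <- (P_false F P HP). apply P_ext; intro w; split; [intros [l [Hl _]]; lia|tauto].
  - assert (HF : forall L, F (fun w => exists l, (l < L)%nat /\ B l w)).
    { intro L'. apply (F_exists F P HP). intro a. apply (F_and_const F P HP); auto. }
    replace (P (fun w => exists l, (l < S L)%nat /\ B l w))
      with (P (fun w => (exists l, (l < L)%nat /\ B l w) \/ B L w)).
    + rewrite (P_add2 F P HP); auto. 
      * rewrite IHL; auto.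
      * intros w [l [Hl X]] Y. apply (D l L w); auto; lia.
    + apply P_ext; intro w; split.
      * intros [[l [Hl X]]|X]; [exists l; split; auto; lia|exists L; auto].
      * intros [l [Hl X]]. destruct (Nat.eq_dec l L); [subst; right; auto|left; exists l; split; auto; lia].
Qed.

Definition measR {Omega} (F : (Omega -> Prop) -> Prop) (f : Omega -> R) :=
  forall t, F (fun w => f w <= t).

Lemma meas_gt {Omega} F P (HP : @is_prob_space Omega F P) f t :
  measR F f -> F (fun w => t < f w).
Proof.
  intro H. apply (F_ext F (fun w => ~ f w <= t)); [intro; split; intros; lra|].
  apply (F_not F P HP); auto.
Qed.

Lemma small_inv (e : R) : 0 < e -> exists k : nat, / (INR k + 1) < e.
Proof.
  intro He. destruct (archimed (/ e)) as [H1 H2].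
  exists (Z.to_nat (up (/ e))).
  assert (0 < / e) by (apply Rinv_0_lt_compat; auto).
  assert (Hz : (0 < up (/ e))%Z) by (apply lt_IZR; lra).
  rewrite INR_IZR_INZ, Z2Nat.id by lia.
  assert (0 < IZR (up (/ e)) + 1) by lra.
  apply (Rmult_lt_reg_l (IZR (up (/ e)) + 1)); auto.
  rewrite Rinv_r by lra.
  apply (Rmult_lt_reg_l (/ e)); auto.
  replace (/ e * ((IZR (up (/ e)) + 1) * e)) with (IZR (up (/ e)) + 1) by (field; lra).
  lra.
Qed.

Lemma meas_lt {Omega} F P (HP : @is_prob_space Omega F P) f t :
  measR F f -> F (fun w => f w < t).
Proof.
  intro H. apply (F_ext F (fun w => exists k : nat, f w <= t - / (INR k + 1))).
  - intro w; split.
    + intros [k Hk]. assert (0 < / (INR k + 1)) by (apply Rinv_0_lt_compat; pose proof (pos_INR k); lra). lra.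
    + intro Hw. destruct (small_inv (t - f w)) as [k Hk]; [lra|]. exists k; lra.
  - apply (F_exists F P HP). intro; apply H.
Qed.

Lemma meas_const {Omega} F P (HP : @is_prob_space Omega F P) c : measR F (fun _ : Omega => c).
Proof. intro t. apply (F_const F P HP). Qed.

Lemma meas_scal {Omega} F P (HP : @is_prob_space Omega F P) c f :
  measR F f -> measR F (fun w => c * f w).
Proof.
  intros H t. destruct (Rtotal_order c 0) as [Hc|[Hc|Hc]].
  - apply (F_ext F (fun w => ~ f w < t / c)).
    + intro w. assert (Ht : t = c * (t / c)) by (field; lra).
      set (u := t / c) in *. rewrite Ht. split; intro X.
      * apply Rnot_lt_le in X. pose proof (Rmult_le_compat_neg_l c u (f w)). lra.
      * intro Y. nra.
    + apply (F_not F P HP). apply (meas_lt F P HP); auto.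
  - subst. apply (F_ext F (fun _ => 0 <= t)); [intro; split; intros; lra|apply (F_const F P HP)].
  - apply (F_ext F (fun w => f w <= t / c)).
    + intro w; split; intro X.
      * replace t with (c * (t / c)) by (field; lra). apply Rmult_le_compat_l; lra.
      * apply (Rmult_le_reg_l c); auto. replace (c * (t / c)) with t by (field; lra). auto.
    + apply H.
Qed.

Lemma dense_q (x y : R) : x < y ->
  exists a b d : nat, x < (INR a - INR b) / (INR d + 1) < y.
Proof.
  intro Hxy. destruct (small_inv (y - x)) as [d Hd]; [lra|].
  set (N := INR d + 1).
  assert (HN : 0 < N) by (unfold N; pose proof (pos_INR d); lra).
  destruct (archimed (x * N)) as [H1 H2].
  set (z := up (x * N)) in *.
  assert (Hz : exists a b : nat, INR a - INR b = IZR z).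
  { destruct (Z_le_gt_dec 0 z).
    - exists (Z.to_nat z), O. rewrite (INR_IZR_INZ (Z.to_nat z)), Z2Nat.id by lia. simpl; lra.
    - exists O, (Z.to_nat (- z)). rewrite (INR_IZR_INZ (Z.to_nat (- z))), Z2Nat.id by lia. rewrite opp_IZR. simpl; lra. }
  destruct Hz as [a [b Hab]]. exists a, b, d. fold N. rewrite Hab. split.
  - apply (Rmult_lt_reg_r N); auto. unfold Rdiv. rewrite Rmult_assoc, Rinv_l by lra. lra.
  - apply (Rmult_lt_reg_r N); auto. unfold Rdiv. rewrite Rmult_assoc, Rinv_l by lra.
    unfold N in Hd. fold N in Hd.
    assert (1 < (y - x) * N).
    { apply (Rmult_lt_reg_l (/ N)). apply Rinv_0_lt_compat; auto.
      replace (/ N * ((y - x) * N)) with (y - x) by (field; lra). lra. }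
    lra.
Qed.

Lemma meas_plus {Omega} F P (HP : @is_prob_space Omega F P) f g :
  measR F f -> measR F g -> measR F (fun w => f w + g w).
Proof.
  intros Hf Hg t.
  apply (F_ext F (fun w => ~ exists a b d : nat,
     (INR a - INR b) / (INR d + 1) < f w /\ t - (INR a - INR b) / (INR d + 1) < g w)).
  - intro w; split.
    + intro X. apply Rnot_lt_le. intro Y. apply X.
      destruct (dense_q (t - g w) (f w)) as [a [b [d Hq]]]; [lra|].
      exists a, b, d; lra.
    + intros X [a [b [d Y]]]. lra.
  - apply (F_not F P HP). apply (F_exists F P HP); intro a. apply (F_exists F P HP); intro b.
    apply (F_exists F P HP); intro d. apply (F_and F P HP); apply (meas_gt F P HP); auto.
Qed.

Lemma meas_sumR {Omega} F P (HP : @is_prob_space Omega F P) (f : nat -> Omega -> R) k :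
  (forall i, (i < k)%nat -> measR F (f i)) -> measR F (fun w => sumR k (fun i => f i w)).
Proof.
  induction k; intro H; simpl.
  - apply (meas_const F P HP).
  - apply (meas_plus F P HP); auto.
Qed.

Lemma prodR_ext k f g : (forall a, (a < k)%nat -> f a = g a) -> prodR k f = prodR k g.
Proof. induction k; intro H; simpl; auto. rewrite IHk by (intros; apply H; lia). rewrite H by lia; auto. Qed.

Lemma sumR_ext k f g : (forall a, (a < k)%nat -> f a = g a) -> sumR k f = sumR k g.
Proof. induction k; intro H; simpl; auto. rewrite IHk by (intros; apply H; lia). rewrite H by lia; auto. Qed.

Lemma prodR_diff k j f g h : (j < k)%nat ->
  (forall a, a <> j -> f a = h a /\ g a = h a) -> h j = f j - g j ->
  prodR k h = prodR k f - prodR k g.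
Proof.
  induction k; intros Hj Hfg Hh; [lia|]. simpl.
  destruct (Nat.eq_dec j k).
  - subst. rewrite (prodR_ext k f h), (prodR_ext k g h) by (intros a Ha; apply Hfg; lia).
    rewrite Hh; ring.
  - rewrite IHk by (auto; lia). destruct (Hfg k) as [E1 E2]; auto. rewrite E1, E2; ring.
Qed.

Lemma prodR_nonneg k f : (forall a, (a < k)%nat -> 0 <= f a) -> 0 <= prodR k f.
Proof. induction k; intro H; simpl; [lra|]. apply Rmult_le_pos; [apply IHk; intros; apply H; lia|apply H; lia]. Qed.

Lemma prodR_first k f : prodR (S k) f = f O * prodR k (fun t => f (S t)).
Proof. induction k; simpl in *; [ring|]. rewrite IHk. ring. Qed.

Definition Fd (nn a b : R) := exp (- a / nn) - exp (- b / nn).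

Lemma exp_mono_le a b : a <= b -> exp a <= exp b.
Proof. intro H; destruct H; [left; apply exp_increasing; auto|subst; lra]. Qed.

Lemma Fd_nonneg nn a b : 0 < nn -> a <= b -> 0 <= Fd nn a b.
Proof.
  intros Hn H. unfold Fd. assert (- b / nn <= - a / nn).
  { unfold Rdiv. apply Rmult_le_compat_r; [left; apply Rinv_0_lt_compat; auto|lra]. }
  pose proof (exp_mono_le _ _ H0). lra.
Qed.

Lemma box_formula {Omega} F P (HP : @is_prob_space Omega F P) (nn : R) (k : nat)
  (Y : nat -> Omega -> R) :
  (forall a t, (a < k)%nat -> F (fun w => Y a w <= t)) ->
  (forall t, (forall a, (a < k)%nat -> 0 <= t a) ->
      P (fun w => forall a, (a < k)%nat -> Y a w <= t a) = prodR k (fun a => 1 - exp (- t a / nn))) ->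
  forall lo hi, (forall a, (a < k)%nat -> 0 <= lo a <= hi a) ->
  P (fun w => forall a, (a < k)%nat -> lo a < Y a w <= hi a) = prodR k (fun a => Fd nn (lo a) (hi a)).
Proof.
  intros Hm Hs lo.
  set (G := fun j hi w => forall a, (a < k)%nat -> ((a < j)%nat -> lo a < Y a w) /\ Y a w <= hi a).
  assert (GF : forall j hi, F (G j hi)).
  { intros j hi. apply (F_forall_lt F P HP). intros a Ha. apply (F_and F P HP); auto.
    apply (F_imp_const F P HP). apply (F_ext F (fun w => ~ Y a w <= lo a)); [intro; split; intros; lra|].
    apply (F_not F P HP); auto. }
  assert (C : forall j, (j <= k)%nat -> forall hi, (forall a, (a < k)%nat -> 0 <= lo a <= hi a) ->
     P (G j hi) = prodR k (fun a => if Nat.ltb a j then Fd nn (lo a) (hi a) else 1 - exp (- hi a / nn))).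
  { induction j; intros Hj hi Hhi.
    - rewrite (prodR_ext k _ (fun a => 1 - exp (- hi a / nn))) by (intros a Ha; reflexivity).
      rewrite <- Hs by (intros a Ha; specialize (Hhi a Ha); lra).
      apply P_ext. intro w; unfold G; split; intros X a Ha; [apply X; auto|split; [lia|auto]].
    - set (hi' := fun a => if Nat.eq_dec a j then lo a else hi a).
      assert (E : P (G j hi) = P (G (S j) hi) + P (G j hi')).
      { rewrite (P_split F P HP (G j hi) (fun w => lo j < Y j w)); auto.
        2:{ apply (F_ext F (fun w => ~ Y j w <= lo j)); [intro; split; intros; lra|]. apply (F_not F P HP); apply Hm; lia. }
        f_equal; apply P_ext; intro w; unfold G, hi'; split.
        - intros [X1 X2] a Ha. destruct (X1 a Ha). split; auto. intro. destruct (Nat.eq_dec a j); [subst; auto|apply H; lia].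
        - intro X; split; [intros a Ha; destruct (X a Ha); split; auto; intro; apply H; lia|]. apply X; lia.
        - intros [X1 X2] a Ha. destruct (X1 a Ha). split; auto. destruct (Nat.eq_dec a j); [subst; lra|auto].
        - intro X. assert (forall a, (a < k)%nat -> ((a < j)%nat -> lo a < Y a w) /\ Y a w <= hi a).
          { intros a Ha. destruct (X a Ha). split; auto. destruct (Nat.eq_dec a j); [subst; specialize (Hhi j Ha); lra|auto]. }
          split; auto. destruct (X j ltac:(lia)). destruct (Nat.eq_dec j j); [lra|congruence]. }
      assert (E2 : P (G (S j) hi) = P (G j hi) - P (G j hi')) by lra.
      assert (Hhi' : forall a, (a < k)%nat -> 0 <= lo a <= hi' a).
      { intros a Ha; unfold hi'; destruct (Nat.eq_dec a j); [specialize (Hhi a Ha); lra|auto]. }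
      rewrite E2, (IHj ltac:(lia) hi Hhi), (IHj ltac:(lia) hi' Hhi').
      symmetry. apply (prodR_diff k j); [lia| |].
      + intros a Hne. unfold hi'. destruct (Nat.eq_dec a j); [congruence|].
        destruct (Nat.ltb a j) eqn:E1; destruct (Nat.ltb a (S j)) eqn:E3; auto;
        apply Nat.ltb_lt in E1 || apply Nat.ltb_ge in E1; apply Nat.ltb_lt in E3 || apply Nat.ltb_ge in E3; lia.
      + unfold hi'. destruct (Nat.eq_dec j j); [|congruence].
        rewrite (proj2 (Nat.ltb_ge j j)), (proj2 (Nat.ltb_lt j (S j))) by lia. unfold Fd. ring. }
  intros hi Hhi. rewrite <- (prodR_ext k (fun a => if Nat.ltb a k then Fd nn (lo a) (hi a) else 1 - exp (- hi a / nn))).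
  - rewrite <- C by (auto; lia). apply P_ext. intro w; unfold G; split; intros X a Ha.
    + destruct (X a Ha); split; auto.
    + destruct (X a Ha); split; auto.
  - intros a Ha. rewrite (proj2 (Nat.ltb_lt a k) Ha); auto.
Qed.

Definition upd (f : nat -> R) (j : nat) (x : R) := fun i => if Nat.eq_dec i j then x else f i.

Definition BP (nn : R) (m j : nat) (lo hi : nat -> R) :=
  prodR (m - j) (fun t => Fd nn (lo (j + t)%nat) (hi (j + t)%nat)).

Lemma BP_step nn m j lo hi x y : (j < m)%nat ->
  BP nn m j (upd lo j x) (upd hi j y) = Fd nn x y * BP nn m (S j) lo hi.
Proof.
  intro Hj. unfold BP. replace (m - j)%nat with (S (m - S j)) by lia.
  rewrite prodR_first. unfold upd. rewrite Nat.add_0_r.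
  destruct (Nat.eq_dec j j); [|congruence]. f_equal.
  apply prodR_ext. intros a Ha. replace (j + S a)%nat with (S j + a)%nat by lia.
  destruct (Nat.eq_dec (S j + a) j); [lia|auto].
Qed.

Lemma BP_nonneg nn m j lo hi : 0 < nn -> (forall i, (j <= i < m)%nat -> lo i <= hi i) -> 0 <= BP nn m j lo hi.
Proof. intros Hn H. unfold BP. apply prodR_nonneg. intros a Ha. apply Fd_nonneg; auto. apply H; lia. Qed.

Definition Hs {Omega} (Y : nat -> Omega -> R) (g : nat -> R) j T w := sumR j (fun i => g i * Y i w) <= T.
Definition Pos {Omega} (Y : nat -> Omega -> R) j w := forall i, (i < j)%nat -> 0 < Y i w.
Definition Bx {Omega} (Y : nat -> Omega -> R) m j (lo hi : nat -> R) w :=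
  forall i, (j <= i)%nat -> (i < m)%nat -> lo i < Y i w <= hi i.

Lemma ev_meas {Omega} F P (HP : @is_prob_space Omega F P) (Y : nat -> Omega -> R) m g j T lo hi :
  (forall i t, (i < m)%nat -> F (fun w => Y i w <= t)) -> (j <= m)%nat ->
  F (fun w => Hs Y g j T w /\ Pos Y j w /\ Bx Y m j lo hi w).
Proof.
  intros Hm Hj. apply (F_and F P HP); [|apply (F_and F P HP)].
  - unfold Hs. apply (meas_sumR F P HP (fun i w => g i * Y i w)). intros i Hi.
    apply (meas_scal F P HP). intro t; apply Hm; lia.
  - unfold Pos. apply (F_forall_lt F P HP). intros a Ha. apply (meas_gt F P HP). intro t; apply Hm; lia.
  - apply (F_ext F (fun w => forall i, (i < m)%nat -> (j <= i)%nat -> lo i < Y i w <= hi i)).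
    + intro w; unfold Bx; split; intros; auto.
    + apply (F_forall_lt F P HP). intros a Ha. apply (F_imp_const F P HP).
      apply (F_and F P HP); [apply (meas_gt F P HP); intro; apply Hm; auto|apply Hm; auto].
Qed.

Lemma sum_pos_nonneg {Omega} (Y : nat -> Omega -> R) g j w :
  (forall i, 0 < g i) -> Pos Y j w -> 0 <= sumR j (fun i => g i * Y i w).
Proof.
  intros Hg Hp. induction j; simpl; [lra|].
  assert (0 < Y j w) by (apply Hp; lia). specialize (Hg j).
  assert (0 <= sumR j (fun i => g i * Y i w)) by (apply IHj; intros i Hi; apply Hp; lia). nra.
Qed.

Lemma cell (y d : R) : 0 < y -> 0 < d -> exists l : nat, INR l * d < y <= INR (S l) * d.
Proof.
  intros Hy Hd. destruct (archimed (- (y / d))) as [H1 H2].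
  set (z := up (- (y / d))) in *.
  assert (Hyd : 0 < y / d) by (apply Rdiv_lt_0_compat; auto).
  assert (Hz : (z <= 0)%Z) by (assert (z < 1)%Z by (apply lt_IZR; lra); lia).
  exists (Z.to_nat (- z)). rewrite S_INR, INR_IZR_INZ, Z2Nat.id by lia. rewrite opp_IZR.
  assert (- IZR z < y / d) by lra. assert (y / d <= - IZR z + 1) by lra.
  split.
  - apply (Rmult_lt_reg_r (/ d)); [apply Rinv_0_lt_compat; auto|].
    rewrite Rmult_assoc, Rinv_r by lra. unfold Rdiv in *. lra.
  - apply (Rmult_le_reg_r (/ d)); [apply Rinv_0_lt_compat; auto|].
    rewrite Rmult_assoc, Rinv_r by lra. unfold Rdiv in *. lra.
Qed.

Lemma sumR_scal L c f : sumR L (fun l => c * f l) = c * sumR L f.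
Proof. induction L; simpl; [ring|rewrite IHL; ring]. Qed.

Lemma sumR_le L f g : (forall l, (l < L)%nat -> f l <= g l) -> sumR L f <= sumR L g.
Proof. induction L; intro H; simpl; [lra|]. apply Rplus_le_compat; [apply IHL; intros; apply H; lia|apply H; lia]. Qed.

Lemma geom_sum L r : 0 <= r < 1 -> sumR L (fun l => r ^ l) <= / (1 - r).
Proof.
  intro Hr. assert (E : sumR L (fun l => r ^ l) * (1 - r) = 1 - r ^ L).
  { induction L; simpl; [ring|]. rewrite Rmult_plus_distr_r, IHL. ring. }
  assert (0 <= r ^ L) by (apply pow_le; lra).
  apply (Rmult_le_reg_r (1 - r)); [lra|]. rewrite E, Rinv_l by lra. lra.
Qed.

Lemma exp_pow_INR x l : exp (INR l * x) = exp x ^ l.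
Proof.
  induction l; simpl; [rewrite Rmult_0_l, exp_0; auto|].
  rewrite <- IHl, <- exp_plus. f_equal. destruct l; simpl; ring.
Qed.

Lemma one_minus_exp_le x : 1 - exp (- x) <= x.
Proof. pose proof (exp_ineq1_le (- x)). lra. Qed.

Lemma one_minus_exp_ge x : 0 <= x -> x / (1 + x) <= 1 - exp (- x).
Proof.
  intro Hx. pose proof (exp_ineq1_le x). pose proof (exp_pos x).
  rewrite exp_Ropp. assert (/ exp x <= / (1 + x)) by (apply Rinv_le_contravar; lra).
  assert (x / (1 + x) = 1 - / (1 + x)) by (field; lra). lra.
Qed.

Lemma U_bound {Omega} F P (HP : @is_prob_space Omega F P) (Y : nat -> Omega -> R) (m : nat) (nn : R)
  (g : nat -> R) (eps : R) :
  (forall i t, (i < m)%nat -> F (fun w => Y i w <= t)) ->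
  (forall lo hi, (forall i, (i < m)%nat -> 0 <= lo i <= hi i) ->
     P (fun w => forall i, (i < m)%nat -> lo i < Y i w <= hi i) = prodR m (fun i => Fd nn (lo i) (hi i))) ->
  0 < nn -> (forall i, 0 < g i) -> 0 < eps < 1 ->
  forall j, (j <= m)%nat -> forall T lo hi, (forall i, (j <= i < m)%nat -> 0 <= lo i <= hi i) ->
  P (fun w => Hs Y g j T w /\ Pos Y j w /\ Bx Y m j lo hi w)
   <= exp T * prodR j (fun i => / ((1 + g i * nn) * (1 - eps))) * BP nn m j lo hi.
Proof.
  intros Hm Hbox Hn Hg Heps.
  assert (Kpos : forall j, 0 <= prodR j (fun i => / ((1 + g i * nn) * (1 - eps)))).
  { intro j. apply prodR_nonneg. intros a _. left. apply Rinv_0_lt_compat.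
    specialize (Hg a). apply Rmult_lt_0_compat; nra. }
  induction j; intros Hj T lo hi Hlh.
  - simpl. destruct (Rle_dec 0 T) as [HT|HT].
    + replace (P (fun w => Hs Y g 0 T w /\ Pos Y 0 w /\ Bx Y m 0 lo hi w))
        with (P (fun w => forall i, (i < m)%nat -> lo i < Y i w <= hi i)).
      * rewrite Hbox by (intros i Hi; apply Hlh; lia).
        unfold BP. rewrite Nat.sub_0_r. simpl.
        pose proof (exp_ineq1_le T). assert (0 <= prodR m (fun i => Fd nn (lo i) (hi i))).
        { apply prodR_nonneg; intros a Ha; apply Fd_nonneg; auto. apply Hlh; lia. }
        nra.
      * apply P_ext. intro w; unfold Hs, Pos, Bx; simpl; split.
        -- intro X; split; auto; split; [intros; lia|]. intros i _ Hi; auto.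
        -- intros [_ [_ X]] i Hi; apply X; auto; lia.
    + replace (P (fun w => Hs Y g 0 T w /\ Pos Y 0 w /\ Bx Y m 0 lo hi w)) with (P (fun _ => False)).
      * rewrite (P_false F P HP). pose proof (exp_pos T).
        assert (0 <= BP nn m 0 lo hi) by (apply BP_nonneg; auto; intros i Hi; specialize (Hlh i Hi); lra). nra.
      * apply P_ext; intro w; unfold Hs; simpl; split; [tauto|intros [X _]; lra].
  - assert (HjK := Kpos j).
    assert (HBP : 0 <= BP nn m (S j) lo hi) by (apply BP_nonneg; auto; intros i Hi; specialize (Hlh i Hi); lra).
    destruct (Rle_dec T 0) as [HT|HT].
    + replace (P (fun w => Hs Y g (S j) T w /\ Pos Y (S j) w /\ Bx Y m (S j) lo hi w)) with (P (fun _ => False)).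
      * rewrite (P_false F P HP). pose proof (exp_pos T). pose proof (Kpos (S j)). 
        apply Rmult_le_pos; [apply Rmult_le_pos|]; lra.
      * apply P_ext; intro w; unfold Hs; simpl; split; [tauto|intros [X [X2 _]]].
        pose proof (sum_pos_nonneg Y g j w Hg (fun i Hi => X2 i ltac:(lia))).
        assert (0 < Y j w) by (apply X2; lia). specialize (Hg j). nra.
    + set (gj := g j). set (G := 1 + gj * nn). assert (HG : 1 < G) by (unfold G, gj; specialize (Hg j); nra).
      set (d := nn * eps / G). assert (Hd : 0 < d) by (unfold d; apply Rdiv_lt_0_compat; nra).
      assert (Hgj : 0 < gj) by apply Hg.
      set (L := Z.to_nat (up (T / (gj * d)))).
      assert (HL : T / gj < INR L * d).
      { destruct (archimed (T / (gj * d))) as [A1 A2].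
        assert (0 < T / (gj * d)) by (apply Rdiv_lt_0_compat; nra).
        assert (0 < IZR (up (T / (gj * d)))) by lra.
        unfold L. rewrite INR_IZR_INZ, Z2Nat.id by (apply le_IZR; lra).
        apply (Rmult_lt_reg_r (/ d)); [apply Rinv_0_lt_compat; auto|].
        rewrite Rmult_assoc, Rinv_r by lra. replace (T / gj * / d) with (T / (gj * d)) by (field; lra). lra. }
      set (piece := fun l w => Hs Y g j (T - gj * (INR l * d)) w /\ Pos Y j w /\
                      Bx Y m j (upd lo j (INR l * d)) (upd hi j (INR (S l) * d)) w).
      assert (Hpf : forall l, F (piece l)) by (intro l; apply (ev_meas F P HP); auto; lia).
      apply Rle_trans with (P (fun w => exists l, (l < L)%nat /\ piece l w)).
      { apply (P_mono F P HP); [apply (ev_meas F P HP); auto| |].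
        - apply (F_exists F P HP); intro l; apply (F_and_const F P HP); auto.
        - intros w [X1 [X2 X3]]. unfold Hs in X1; simpl in X1.
          assert (Hpj : Pos Y j w) by (intros i Hi; apply X2; lia).
          pose proof (sum_pos_nonneg Y g j w Hg Hpj).
          assert (HY : 0 < Y j w) by (apply X2; lia).
          destruct (cell (Y j w) d HY Hd) as [l [Hl1 Hl2]].
          exists l. split.
          + apply INR_lt. apply (Rmult_lt_reg_r d); auto.
            apply Rlt_le_trans with (Y j w); auto.
            apply Rle_trans with (T / gj); [|lra].
            apply (Rmult_le_reg_l gj); auto. replace (gj * (T / gj)) with T by (field; lra). fold gj in X1. lra.
          + unfold piece. split; [|split]; auto.
            * unfold Hs. fold gj in X1. assert (gj * (INR l * d) <= gj * Y j w) by (apply Rmult_le_compat_l; lra). lra.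
            * intros i Hi1 Hi2. unfold upd. destruct (Nat.eq_dec i j); [subst; lra|]. apply X3; lia. }
      apply Rle_trans with (sumR L (fun l => P (piece l))); [apply (P_union_le F P HP); auto|].
      apply Rle_trans with (sumR L (fun l => exp T * prodR j (fun i => / ((1 + g i * nn) * (1 - eps))) * BP nn m (S j) lo hi
                                 * (exp (- gj * (INR l * d)) * Fd nn (INR l * d) (INR (S l) * d)))).
      { apply sumR_le. intros l Hl. unfold piece. eapply Rle_trans; [apply IHj|].
        - lia.
        - intros i Hi. unfold upd. destruct (Nat.eq_dec i j).
          + subst. split; [apply Rmult_le_pos; [apply pos_INR|lra]|]. apply Rmult_le_compat_r; [lra|]. apply le_INR; lia.
          + apply Hlh; lia.
        - rewrite BP_step by lia. replace (T - gj * (INR l * d)) with (T + - gj * (INR l * d)) by ring.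
          rewrite exp_plus. right; ring. }
      rewrite sumR_scal.
      set (K := exp T * prodR j (fun i => / ((1 + g i * nn) * (1 - eps))) * BP nn m (S j) lo hi).
      assert (HK : 0 <= K) by (unfold K; pose proof (exp_pos T); apply Rmult_le_pos; [apply Rmult_le_pos|]; lra).
      replace (exp T * prodR (S j) (fun i => / ((1 + g i * nn) * (1 - eps))) * BP nn m (S j) lo hi)
        with (K * / ((1 + gj * nn) * (1 - eps))) by (unfold K, gj; simpl; ring).
      apply Rmult_le_compat_l; auto.
      set (r := exp (- eps)).
      assert (Hterm : forall l, exp (- gj * (INR l * d)) * Fd nn (INR l * d) (INR (S l) * d)
                        = (1 - exp (- (eps / G))) * r ^ l).
      { intro l. unfold r. rewrite <- exp_pow_INR. unfold Fd. rewrite S_INR.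
        assert (HG0 : 1 + gj * nn <> 0) by (unfold G in HG; lra). assert (Hn0 : nn <> 0) by lra.
        replace (- ((INR l + 1) * d) / nn) with (- (INR l * d) / nn + - (eps / G))
          by (unfold d, G; field; auto).
        rewrite (exp_plus (- (INR l * d) / nn) (- (eps / G))).
        replace (INR l * - eps) with (- gj * (INR l * d) + - (INR l * d) / nn)
          by (unfold d, G; field; auto).
        rewrite exp_plus. ring. }
      rewrite (sumR_ext L _ (fun l => (1 - exp (- (eps / G))) * r ^ l)) by (intros; apply Hterm).
      rewrite sumR_scal.
      assert (Hr : 0 <= r < 1).
      { unfold r. split; [left; apply exp_pos|]. rewrite <- exp_0. apply exp_increasing. lra. }
      pose proof (geom_sum L r Hr).
      pose proof (one_minus_exp_le (eps / G)).
      assert (0 <= 1 - exp (- (eps / G))).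
      { assert (exp (- (eps / G)) <= 1) by (rewrite <- exp_0; apply exp_mono_le; assert (0 < eps / G) by (apply Rdiv_lt_0_compat; lra); lra). lra. }
      pose proof (one_minus_exp_ge eps ltac:(lra)). fold r in H2.
      apply Rle_trans with ((eps / G) * / (1 - r)).
      { apply Rle_trans with ((1 - exp (- (eps / G))) * / (1 - r)); [apply Rmult_le_compat_l; auto|].
        apply Rmult_le_compat_r; auto. left; apply Rinv_0_lt_compat; lra. }
      apply Rle_trans with ((eps / G) * ((1 + eps) / eps)).
      { apply Rmult_le_compat_l; [left; apply Rdiv_lt_0_compat; lra|].
        replace ((1 + eps) / eps) with (/ (eps / (1 + eps))) by (field; lra).
        apply Rinv_le_contravar; [apply Rdiv_lt_0_compat; lra|lra]. }
      fold gj. fold G. replace (eps / G * ((1 + eps) / eps)) with ((1 + eps) / G) by (field; lra).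
      apply (Rmult_le_reg_l (G * (1 - eps))); [nra|].
      replace (G * (1 - eps) * / (G * (1 - eps))) with 1 by (field; nra).
      replace (G * (1 - eps) * ((1 + eps) / G)) with ((1 - eps) * (1 + eps)) by (field; lra). nra.
Qed.

Lemma sumR_shift L f : sumR (S L) f = f O + sumR L (fun t => f (S t)).
Proof. induction L; simpl in *; [ring|]. rewrite IHL. ring. Qed.

Lemma sumR_rev L f : sumR L (fun l => f (L - 1 - l)%nat) = sumR L f.
Proof.
  revert f; induction L; intro f; simpl; auto.
  rewrite Nat.sub_0_r, Nat.sub_diag.
  rewrite (sumR_ext L _ (fun l => f (S (L - 1 - l)))) by (intros a Ha; f_equal; lia).
  pose proof (IHL (fun t => f (S t))) as E. cbv beta in E. rewrite E. pose proof (sumR_shift L f) as E2. simpl in E2. lra.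
Qed.

Lemma pow_diff_le a b j : 0 <= b <= a -> a ^ S j - b ^ S j <= INR (S j) * a ^ j * (a - b).
Proof.
  intro H. induction j.
  - simpl. lra.
  - assert (b ^ S j <= a ^ S j) by (apply pow_incr; lra).
    replace (a ^ S (S j) - b ^ S (S j)) with (a * (a ^ S j - b ^ S j) + b ^ S j * (a - b)) by (simpl; ring).
    rewrite S_INR.
    replace ((INR (S j) + 1) * a ^ S j * (a - b)) with (a * (INR (S j) * a ^ j * (a - b)) + a ^ S j * (a - b)) by (simpl; ring).
    apply Rplus_le_compat; [apply Rmult_le_compat_l; lra|apply Rmult_le_compat_r; lra].
Qed.

Lemma pow_sum_lower L j : INR L ^ S j <= INR (S j) * sumR (S L) (fun t => INR t ^ j).
Proof.
  induction L.
  - simpl. rewrite Rmult_0_l. assert (0 <= INR j + 1) by (pose proof (pos_INR j); lra).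
    destruct j; simpl; nra.
  - pose proof (pow_diff_le (INR (S L)) (INR L) j) as H.
    rewrite S_INR in H at 2 3. rewrite !S_INR in *. 
    specialize (H ltac:(pose proof (pos_INR L); lra)).
    change (sumR (S (S L)) (fun t => INR t ^ j)) with (sumR (S L) (fun t => INR t ^ j) + INR (S L) ^ j).
    rewrite S_INR. replace (INR L + 1 - INR L) with 1 in H by ring. nra.
Qed.

Definition Psi (nn eps : R) (j : nat) (s : R) :=
  if Rle_dec (INR j * eps) s then exp (- s / nn) * ((s - INR j * eps) / nn) ^ j / INR (fact j) else 0.

Lemma ev_meas2 {Omega} F P (HP : @is_prob_space Omega F P) (Y : nat -> Omega -> R) m g j T lo hi :
  (forall i t, (i < m)%nat -> F (fun w => Y i w <= t)) -> (j <= m)%nat ->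
  F (fun w => Hs Y g j T w /\ Bx Y m j lo hi w).
Proof.
  intros Hm Hj. apply (F_ext F (fun w => (Hs Y g j T w /\ Pos Y j w /\ Bx Y m j lo hi w) \/
        (Hs Y g j T w /\ ~ Pos Y j w /\ Bx Y m j lo hi w))).
  - intro w; split; [tauto|]. intros [X1 X2]. destruct (classic (Pos Y j w)); tauto.
  - apply (F_or F P HP); [apply (ev_meas F P HP); auto|].
    apply (F_and F P HP); [|apply (F_and F P HP)].
    + unfold Hs. apply (meas_sumR F P HP (fun i w => g i * Y i w)). intros i Hi.
      apply (meas_scal F P HP). intro t; apply Hm; lia.
    + apply (F_not F P HP). unfold Pos. apply (F_forall_lt F P HP). intros a Ha. apply (meas_gt F P HP). intro t; apply Hm; lia.
    + apply (F_ext F (fun w => forall i, (i < m)%nat -> (j <= i)%nat -> lo i < Y i w <= hi i)).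
      * intro w; unfold Bx; split; intros; auto.
      * apply (F_forall_lt F P HP). intros a Ha. apply (F_imp_const F P HP).
        apply (F_and F P HP); [apply (meas_gt F P HP); intro; apply Hm; auto|apply Hm; auto].
Qed.

Lemma Fd_lower nn a d : 0 < nn -> 0 <= d -> exp (- (a + d) / nn) * (d / nn) <= Fd nn a (a + d).
Proof.
  intros Hn Hd. unfold Fd.
  replace (- a / nn) with (- (a + d) / nn + d / nn) by (field; lra).
  rewrite exp_plus. pose proof (exp_ineq1_le (d / nn)). pose proof (exp_pos (- (a + d) / nn)). nra.
Qed.

Lemma L_bound {Omega} F P (HP : @is_prob_space Omega F P) (Y : nat -> Omega -> R) (m : nat) (nn : R) (eps : R) :
  (forall i t, (i < m)%nat -> F (fun w => Y i w <= t)) ->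
  (forall lo hi, (forall i, (i < m)%nat -> 0 <= lo i <= hi i) ->
     P (fun w => forall i, (i < m)%nat -> lo i < Y i w <= hi i) = prodR m (fun i => Fd nn (lo i) (hi i))) ->
  0 < nn -> 0 < eps ->
  forall j, (j <= m)%nat -> forall s lo hi, (forall i, (j <= i < m)%nat -> 0 <= lo i <= hi i) ->
  Psi nn eps j s * BP nn m j lo hi <= P (fun w => Hs Y (fun _ => 1) j s w /\ Bx Y m j lo hi w).
Proof.
  intros Hm Hbox Hn Heps.
  induction j; intros Hj s lo hi Hlh.
  - unfold Psi. simpl INR. rewrite Rmult_0_l. destruct (Rle_dec 0 s) as [Hs0|Hs0].
    + replace (P (fun w => Hs Y (fun _ => 1) 0 s w /\ Bx Y m 0 lo hi w))
        with (P (fun w => forall i, (i < m)%nat -> lo i < Y i w <= hi i)).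
      * rewrite Hbox by (intros i Hi; apply Hlh; lia).
        unfold BP. rewrite Nat.sub_0_r. simpl.
        assert (exp (- s / nn) <= 1).
        { rewrite <- exp_0. apply exp_mono_le. unfold Rdiv. assert (0 <= s * / nn) by (apply Rmult_le_pos; [lra|left; apply Rinv_0_lt_compat; auto]). lra. }
        assert (0 <= prodR m (fun i => Fd nn (lo i) (hi i))).
        { apply prodR_nonneg; intros a Ha; apply Fd_nonneg; auto. apply Hlh; lia. }
        replace (exp (- s / nn) * ((s - 0) / nn) ^ 0 / 1) with (exp (- s / nn)) by (simpl; field). nra.
      * apply P_ext. intro w; unfold Hs, Bx; simpl; split.
        -- intro X; split; [|intros i _ Hi]; auto.
        -- intros [_ X] i Hi; apply X; auto; lia.
    + rewrite Rmult_0_l. apply (P_nonneg F P HP). apply (ev_meas2 F P HP); auto; lia.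
  - assert (HBP : 0 <= BP nn m (S j) lo hi) by (apply BP_nonneg; auto; intros i Hi; specialize (Hlh i Hi); lra).
    assert (Hev : F (fun w => Hs Y (fun _ => 1) (S j) s w /\ Bx Y m (S j) lo hi w)) by (apply (ev_meas2 F P HP); auto).
    unfold Psi at 1. destruct (Rle_dec (INR (S j) * eps) s) as [Hs1|Hs1].
    2:{ rewrite Rmult_0_l. apply (P_nonneg F P HP); auto. }
    set (st := s - INR j * eps).
    assert (Hst : eps <= st) by (unfold st; rewrite S_INR in Hs1; lra).
    set (L := Z.to_nat (up (st / eps))).
    assert (HL : st / eps < INR L).
    { destruct (archimed (st / eps)) as [A1 A2].
      assert (1 <= st / eps) by (apply (Rmult_le_reg_r eps); auto; unfold Rdiv; rewrite Rmult_assoc, Rinv_l; lra).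
      unfold L. rewrite INR_IZR_INZ, Z2Nat.id by (apply le_IZR; lra). lra. }
    assert (HL1 : 1 <= INR L).
    { assert (1 <= st / eps) by (apply (Rmult_le_reg_r eps); auto; unfold Rdiv; rewrite Rmult_assoc, Rinv_l; lra). lra. }
    assert (HLpos : (1 <= L)%nat) by (apply INR_le; simpl; lra).
    set (d := st / INR L).
    assert (Hd : 0 < d) by (unfold d; apply Rdiv_lt_0_compat; lra).
    assert (Hdeps : d <= eps).
    { unfold d. apply (Rmult_le_reg_r (INR L)); [lra|]. unfold Rdiv; rewrite Rmult_assoc, Rinv_l by lra.
      rewrite Rmult_1_r. apply (Rmult_le_reg_r (/ eps)); [apply Rinv_0_lt_compat; auto|].
      replace (eps * INR L * / eps) with (INR L) by (field; lra). unfold Rdiv in HL. lra. }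
    assert (HLd : INR L * d = st) by (unfold d; field; lra).
    set (piece := fun l w => Hs Y (fun _ => 1) j (s - INR (S l) * d) w /\
                      Bx Y m j (upd lo j (INR l * d)) (upd hi j (INR (S l) * d)) w).
    assert (Hpf : forall l, F (piece l)) by (intro l; apply (ev_meas2 F P HP); auto; lia).
    apply Rle_trans with (P (fun w => exists l, (l < L)%nat /\ piece l w)).
    2:{ apply (P_mono F P HP); auto.
        - apply (F_exists F P HP); intro l; apply (F_and_const F P HP); auto.
        - intros w [l [Hl [X1 X2]]]. split.
          + unfold Hs in *. simpl. specialize (X2 j ltac:(lia) ltac:(lia)). unfold upd in X2.
            destruct (Nat.eq_dec j j); [|congruence]. lra.
          + intros i Hi1 Hi2. specialize (X2 i ltac:(lia) Hi2). unfold upd in X2.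
            destruct (Nat.eq_dec i j); [lia|auto]. }
    rewrite (P_union_eq F P HP); auto.
    2:{ intros a b w Hab [_ Xa] [_ Xb]. specialize (Xa j ltac:(lia) ltac:(lia)). specialize (Xb j ltac:(lia) ltac:(lia)).
        unfold upd in Xa, Xb. destruct (Nat.eq_dec j j); [|congruence].
        destruct (Nat.lt_total a b) as [H|[H|H]]; [|congruence|].
        - assert (INR (S a) <= INR b) by (apply le_INR; lia). nra.
        - assert (INR (S b) <= INR a) by (apply le_INR; lia). nra. }
    apply Rle_trans with (sumR L (fun l => Psi nn eps j (s - INR (S l) * d) * Fd nn (INR l * d) (INR (S l) * d) * BP nn m (S j) lo hi)).
    2:{ apply sumR_le. intros l Hl. unfold piece. eapply Rle_trans; [|apply IHj].
        - rewrite BP_step by lia. right; ring.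
        - lia.
        - intros i Hi. unfold upd. destruct (Nat.eq_dec i j).
          + subst. split; [apply Rmult_le_pos; [apply pos_INR|lra]|]. apply Rmult_le_compat_r; [lra|]. apply le_INR; lia.
          + apply Hlh; lia. }
    apply Rle_trans with (sumR L (fun l => exp (- s / nn) * (d / nn) ^ S j / INR (fact j) * INR (L - 1 - l) ^ j * BP nn m (S j) lo hi)).
    2:{ apply sumR_le. intros l Hl.
        unfold Psi. destruct (Rle_dec (INR j * eps) (s - INR (S l) * d)) as [C|C].
        2:{ exfalso. apply C. assert (INR (S l) <= INR L) by (apply le_INR; lia). unfold st in HLd. nra. }
        apply Rmult_le_compat_r; auto.
        assert (E1 : s - INR (S l) * d - INR j * eps = INR (L - 1 - l) * d).
        { rewrite minus_INR by lia. rewrite minus_INR by lia. rewrite S_INR. simpl INR. unfold st in HLd. nra. }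
        rewrite E1.
        pose proof (Fd_lower nn (INR l * d) d Hn ltac:(lra)) as Hfd.
        replace (INR l * d + d) with (INR (S l) * d) in Hfd by (rewrite S_INR; ring).
        assert (Hf : 0 < INR (fact j)) by (apply lt_0_INR, lt_O_fact).
        assert (Hp : 0 <= (INR (L - 1 - l) * d / nn) ^ j) by (apply pow_le; apply Rmult_le_pos; [apply Rmult_le_pos; [apply pos_INR|lra]|left; apply Rinv_0_lt_compat; auto]).
        apply Rle_trans with (exp (- (s - INR (S l) * d) / nn) * (INR (L - 1 - l) * d / nn) ^ j / INR (fact j) *
                                (exp (- (INR (S l) * d) / nn) * (d / nn))).
        + right. replace (- s / nn) with (- (s - INR (S l) * d) / nn + - (INR (S l) * d) / nn) by (field; lra).
          rewrite exp_plus. replace (INR (L - 1 - l) * d / nn) with (INR (L - 1 - l) * (d / nn)) by (field; lra).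
          rewrite Rpow_mult_distr. simpl. field. lra.
        + apply Rmult_le_compat_l; auto.
          apply Rmult_le_pos; [apply Rmult_le_pos; [left; apply exp_pos|auto]|left; apply Rinv_0_lt_compat; auto]. }
    rewrite (sumR_ext L _ (fun l => (exp (- s / nn) * (d / nn) ^ S j / INR (fact j) * BP nn m (S j) lo hi) * INR (L - 1 - l) ^ j))
      by (intros; ring).
    rewrite sumR_scal.
    rewrite (sumR_rev L (fun t => INR t ^ j)).
    pose proof (pow_sum_lower (L - 1) j) as Hps. replace (S (L - 1)) with L in Hps by lia.
    rewrite minus_INR in Hps by lia. replace (INR 1) with 1 in Hps by reflexivity.
    assert (Hf : 0 < INR (fact j)) by (apply lt_0_INR, lt_O_fact).
    assert (HSj : 0 < INR (S j)) by (apply lt_0_INR; lia).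
    assert (Hx : s - INR (S j) * eps <= (INR L - 1) * d) by (rewrite S_INR; unfold st in HLd; nra).
    assert (Hx0 : 0 <= s - INR (S j) * eps) by lra.
    assert (Hpw : ((s - INR (S j) * eps) / nn) ^ S j <= ((INR L - 1) * d / nn) ^ S j).
    { apply pow_incr. split; [apply Rmult_le_pos; [lra|left; apply Rinv_0_lt_compat; auto]|].
      apply Rmult_le_compat_r; [left; apply Rinv_0_lt_compat; auto|lra]. }
    set (A := exp (- s / nn) * (d / nn) ^ S j / INR (fact j) * BP nn m (S j) lo hi).
    assert (HA : 0 <= A).
    { unfold A. apply Rmult_le_pos; auto. unfold Rdiv. apply Rmult_le_pos; [|left; apply Rinv_0_lt_compat; auto].
      apply Rmult_le_pos; [left; apply exp_pos|apply pow_le; apply Rmult_le_pos; [lra|left; apply Rinv_0_lt_compat; auto]]. }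
    assert (E : exp (- s / nn) * ((INR L - 1) * d / nn) ^ S j / INR (fact (S j)) * BP nn m (S j) lo hi
              = A * ((INR L - 1) ^ S j / INR (S j))).
    { unfold A. change (fact (S j)) with (S j * fact j)%nat. rewrite mult_INR.
      replace ((INR L - 1) * d / nn) with ((INR L - 1) * (d / nn)) by (field; lra).
      rewrite Rpow_mult_distr. field. lra. }
    apply Rle_trans with (exp (- s / nn) * ((INR L - 1) * d / nn) ^ S j / INR (fact (S j)) * BP nn m (S j) lo hi).
    + apply Rmult_le_compat_r; auto. unfold Rdiv. apply Rmult_le_compat_r; [left; apply Rinv_0_lt_compat, lt_0_INR, lt_O_fact|].
      apply Rmult_le_compat_l; [left; apply exp_pos|auto].
    + rewrite E. apply Rmult_le_compat_l; auto.
      apply (Rmult_le_reg_l (INR (S j))); auto.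
      replace (INR (S j) * ((INR L - 1) ^ S j / INR (S j))) with ((INR L - 1) ^ S j) by (field; lra). auto.
Qed.

Definition ee1 (v : nat -> nat) a := Nat.min (v a) (v (S a)).
Definition ee2 (v : nat -> nat) a := Nat.max (v a) (v (S a)).

Lemma Y_eq {Omega} (W : nat -> nat -> Omega -> R) v a :
  v a <> v (S a) -> edge_weight W (v a) (v (S a)) = W (ee1 v a) (ee2 v a).
Proof.
  intro H. unfold edge_weight, ee1, ee2.
  destruct (Nat.ltb_spec (v a) (v (S a))).
  - rewrite Nat.min_l, Nat.max_r by lia; auto.
  - rewrite Nat.min_r, Nat.max_l by lia; auto.
Qed.

Lemma path_edges n m v : is_path n m v ->
  (forall a, (a < m)%nat -> (ee1 v a < ee2 v a < n)%nat /\ v a <> v (S a)) /\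
  (forall a b, (a < m)%nat -> (b < m)%nat -> ee1 v a = ee1 v b -> ee2 v a = ee2 v b -> a = b).
Proof.
  intros [Hr Hi]. split.
  - intros a Ha. assert (v a <> v (S a)) by (intro E; apply Hi in E; lia).
    pose proof (Hr a ltac:(lia)). pose proof (Hr (S a) ltac:(lia)).
    unfold ee1, ee2. split; [|auto]. destruct (Nat.ltb_spec (v a) (v (S a))).
    + rewrite Nat.min_l, Nat.max_r by lia; lia.
    + rewrite Nat.min_r, Nat.max_l by lia; lia.
  - intros a b Ha Hb E1 E2. unfold ee1, ee2 in *.
    destruct (Nat.le_gt_cases (v a) (v (S a))); destruct (Nat.le_gt_cases (v b) (v (S b))).
    + rewrite Nat.min_l, Nat.max_r in * by lia. rewrite (Nat.min_l (v b)), (Nat.max_r (v b)) in * by lia.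
      apply Hi; lia.
    + rewrite Nat.min_l, Nat.max_r in * by lia. rewrite (Nat.min_r (v b)), (Nat.max_l (v b)) in * by lia.
      apply Hi in E1; try lia. apply Hi in E2; lia.
    + rewrite Nat.min_r, Nat.max_l in * by lia. rewrite (Nat.min_l (v b)), (Nat.max_r (v b)) in * by lia.
      apply Hi in E1; try lia. apply Hi in E2; lia.
    + rewrite Nat.min_r, Nat.max_l in * by lia. rewrite (Nat.min_r (v b)), (Nat.max_l (v b)) in * by lia.
      apply Hi in E2; lia.
Qed.

Lemma path_meas {Omega} n m F P (W : nat -> nat -> Omega -> R) v :
  iid_exp_weights n F P W -> is_path n m v ->
  forall i t, (i < m)%nat -> F (fun w => edge_weight W (v i) (v (S i)) w <= t).
Proof.
  intros [Hm _] Hp i t Hi. destruct (path_edges n m v Hp) as [He _].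
  destruct (He i Hi) as [H1 H2]. rewrite Y_eq by auto. apply Hm; auto.
Qed.

Lemma path_spec {Omega} n m F P (W : nat -> nat -> Omega -> R) v :
  iid_exp_weights n F P W -> is_path n m v ->
  forall t, (forall a, (a < m)%nat -> 0 <= t a) ->
  P (fun w => forall a, (a < m)%nat -> edge_weight W (v a) (v (S a)) w <= t a)
   = prodR m (fun a => 1 - exp (- t a / INR n)).
Proof.
  intros [_ Hs] Hp t Ht. destruct (path_edges n m v Hp) as [He Hd].
  rewrite <- (Hs m (ee1 v) (ee2 v) t).
  - apply P_ext. intro w; split; intros X a Ha; specialize (X a Ha); rewrite Y_eq in * by (apply He; auto); auto.
  - intros a Ha; split; [apply He; auto|auto].
  - auto.
Qed.

Lemma path_pos0 {Omega} n m F P (W : nat -> nat -> Omega -> R) v :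
  iid_exp_weights n F P W -> is_path n m v ->
  forall i, (i < m)%nat -> P (fun w => edge_weight W (v i) (v (S i)) w <= 0) = 0.
Proof.
  intros [_ Hs] Hp i Hi. destruct (path_edges n m v Hp) as [He Hd].
  destruct (He i Hi) as [H1 H2].
  rewrite Y_eq by auto.
  transitivity (P (fun w => forall a, (a < 1)%nat -> W ((fun _ => ee1 v i) a) ((fun _ => ee2 v i) a) w <= (fun _ => 0) a)).
  - apply P_ext. intro w; split; [intros X a Ha; auto|intro X; apply (X O); lia].
  - rewrite Hs; [simpl|intros a Ha; split; [auto|lra]|intros; lia].
    replace (- 0 / INR n) with 0 by (unfold Rdiv; ring). rewrite exp_0. ring.
Qed.

Lemma exp1_ge2 : 2 <= exp 1.
Proof. pose proof (exp_ineq1_le 1). lra. Qed.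

Lemma bernoulli m x : 0 <= x <= 1 -> 1 - INR m * x <= (1 - x) ^ m.
Proof.
  intro Hx. induction m; [simpl; lra|]. rewrite S_INR.
  change ((1 - x) ^ S m) with ((1 - x) * (1 - x) ^ m).
  assert (0 <= (1 - x) ^ m) by (apply pow_le; lra). pose proof (pos_INR m). nra.
Qed.

Lemma exp_cube x : 0 <= x -> (x / 3) ^ 3 <= exp x.
Proof.
  intro Hx. replace x with (INR 3 * (x / 3)) at 2 by (simpl; field).
  rewrite exp_pow_INR. apply pow_incr. pose proof (exp_ineq1_le (x / 3)). lra.
Qed.

Lemma Qbound r : 0 <= r <= 3 / 2 -> (1 + r) * exp (- r) <= exp (- (r * r) / 8).
Proof.
  intro Hr. set (x := r - r * r / 8).
  assert (Hx : 0 <= x) by (unfold x; nra).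
  assert (H1 : 1 + r <= exp x).
  { replace x with (INR 2 * (x / 2)) by (simpl; field). rewrite exp_pow_INR.
    pose proof (exp_ineq1_le (x / 2)).
    apply Rle_trans with ((1 + x / 2) ^ 2); [|apply pow_incr; lra].
    unfold x. simpl. nra. }
  replace (- (r * r) / 8) with (x + - r) by (unfold x; field).
  rewrite exp_plus. pose proof (exp_pos (- r)). nra.
Qed.

Lemma fact_bound m : (1 <= m)%nat -> INR (fact m) <= exp 1 * INR m ^ S m * exp (- INR m).
Proof.
  induction m; intro Hm; [lia|].
  destruct m.
  - assert (E2 : exp 1 * exp (- (1)) = 1) by (rewrite <- exp_plus; replace (1 + - (1)) with 0 by ring; apply exp_0).
    simpl. nra.
  - specialize (IHm ltac:(lia)). set (M := INR (S m)).
    assert (HM : 1 <= M) by (unfold M; rewrite S_INR; pose proof (pos_INR m); lra).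
    change (fact (S (S m))) with (S (S m) * fact (S m))%nat. rewrite mult_INR.
    replace (INR (S (S m))) with (M + 1) by (unfold M; rewrite (S_INR (S m)); ring).
    assert (Hk : exp 1 * M ^ S (S m) <= (M + 1) ^ S (S m)).
    { assert (He : exp (1 / (M + 1)) <= (M + 1) / M).
      { pose proof (exp_ineq1_le (- (1 / (M + 1)))).
        assert (0 < 1 + - (1 / (M + 1))).
        { assert (1 / (M + 1) < 1) by (apply (Rmult_lt_reg_r (M + 1)); [lra|]; unfold Rdiv; rewrite Rmult_assoc, Rinv_l; lra). lra. }
        rewrite exp_Ropp in H. replace ((M + 1) / M) with (/ (1 + - (1 / (M + 1)))) by (field; lra).
        replace (exp (1 / (M + 1))) with (/ / exp (1 / (M + 1))) by (rewrite Rinv_inv; auto).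
        apply Rinv_le_contravar; auto. }
      assert (E1 : exp 1 = exp (1 / (M + 1)) ^ S (S m)).
      { rewrite <- exp_pow_INR. f_equal. replace (INR (S (S m))) with (M + 1) by (unfold M; rewrite (S_INR (S m)); ring). field; lra. }
      rewrite E1. rewrite <- Rpow_mult_distr.
      apply pow_incr. split; [apply Rmult_le_pos; [left; apply exp_pos|lra]|].
      apply Rle_trans with ((M + 1) / M * M); [apply Rmult_le_compat_r; lra|right; field; lra]. }
    replace (INR (S (S m))) with (M + 1) by (unfold M; rewrite (S_INR (S m)); ring).
    replace (exp (- (M + 1))) with (exp (- M) * exp (-1)) by (rewrite <- exp_plus; f_equal; ring).
    assert (E2 : exp 1 * exp (-1) = 1) by (rewrite <- exp_plus; replace (1 + -1) with 0 by ring; apply exp_0).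
    assert (0 < exp (- M)) by apply exp_pos.
    apply Rle_trans with ((M + 1) * (exp 1 * M ^ S (S m) * exp (- M))).
    + apply Rmult_le_compat_l; [lra|]. unfold M; exact IHm.
    + apply Rle_trans with ((M + 1) * ((M + 1) ^ S (S m) * exp (- M))).
      * apply Rmult_le_compat_l; [lra|]. apply Rmult_le_compat_r; lra.
      * right. simpl pow. replace (exp 1) with (/ exp (-1)) by (rewrite <- exp_Ropp; f_equal; ring).
        field. pose proof (exp_pos (-1)); lra.
Qed.

Lemma sumR_if m h a b f :
  sumR m (fun i => (if Nat.ltb i h then a else b) * f i)
  = a * sumR (Nat.min h m) f + b * (sumR m f - sumR (Nat.min h m) f).
Proof.
  induction m; simpl.
  - rewrite Nat.min_0_r. simpl. ring.
  - rewrite IHm. destruct (Nat.ltb_spec m h).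
    + rewrite (Nat.min_r h m), (Nat.min_r h (S m)) by lia. simpl. ring.
    + rewrite (Nat.min_l h m), (Nat.min_l h (S m)) by lia. ring.
Qed.

Lemma prodR_if m h a b :
  prodR m (fun i => if Nat.ltb i h then a else b) = a ^ (Nat.min h m) * b ^ (m - Nat.min h m).
Proof.
  induction m; cbn [prodR].
  - rewrite Nat.min_0_r. simpl. ring.
  - rewrite IHm. destruct (Nat.ltb_spec m h).
    + rewrite (Nat.min_r h m), (Nat.min_r h (S m)) by lia. rewrite !Nat.sub_diag. simpl. ring.
    + rewrite (Nat.min_l h m), (Nat.min_l h (S m)) by lia.
      replace (S m - h)%nat with (S (m - h)) by lia. simpl. ring.
Qed.

Lemma sumR_const L c : sumR L (fun _ => c) = INR L * c.
Proof. induction L; simpl sumR; [simpl; ring|]. rewrite IHL, S_INR. ring. Qed.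

Lemma F_and_imp {Omega} F P (HP : @is_prob_space Omega F P) (C : Prop) A :
  (C -> F A) -> F (fun w => C /\ A w).
Proof.
  intro H. destruct (classic C) as [c|c].
  - apply (F_and_const F P HP); auto.
  - apply (F_ext F (fun _ => False)); [tauto|apply (F_false F P HP)].
Qed.

Theorem lemma2p4 :
  forall (eta' delta0 : R),
    0 < eta' < 1 / 4 -> 0 < delta0 < 1 ->
    exists ns : nat, (0 < ns)%nat /\
      forall (eta : R) (l : nat), 0 < eta < eta' ->
        INR l <= 1 / eta' < INR l + 1 ->
        forall (n m : nat) (delta : R),
          (ns <= n)%nat -> delta0 <= delta ->
          (1 <= m)%nat -> delta * INR n = INR m ->
          forall (Omega : Type) (F : (Omega -> Prop) -> Prop)
                 (P : (Omega -> Prop) -> R) (W : nat -> nat -> Omega -> R),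
            is_prob_space F P -> iid_exp_weights n F P W ->
            forall v : nat -> nat, is_path n m v ->
              let lam := exp (-1) + eta in
              P (fun w => event_E W v m l lam eta' w /\ path_A W v m w <= lam)
                / P (fun w => path_A W v m w <= lam)
              <= 2 * INR n * exp (- (delta * INR n) * eta' / 16).
Proof.
  intros eta' delta0 Heta' Hd0.
  set (M0 := 12 * (432 / (7 * eta')) ^ 3).
  assert (HM0 : 0 < M0) by (unfold M0; apply Rmult_lt_0_compat; [lra|apply pow_lt; apply Rdiv_lt_0_compat; lra]).
  set (ns := S (S (Z.to_nat (up (M0 / delta0))))).
  assert (Hns : M0 / delta0 <= INR ns /\ 2 <= INR ns).
  { destruct (archimed (M0 / delta0)) as [A1 A2].
    assert (0 < M0 / delta0) by (apply Rdiv_lt_0_compat; lra).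
    unfold ns. rewrite !S_INR, INR_IZR_INZ, Z2Nat.id by (apply le_IZR; lra). lra. }
  exists ns. split; [unfold ns; lia|].
  intros eta l Heta Hl n m delta Hn Hdelta Hm1 Hdm Omega F P W HP Hiid v Hpath lam.
  set (nn := INR n) in *. set (M := INR m) in *.
  assert (Hnn : INR ns <= nn) by (apply le_INR; auto).
  assert (HM1 : 1 <= M) by (unfold M; apply (le_INR 1); auto).
  assert (HMM0 : M0 <= M).
  { rewrite <- Hdm. apply Rle_trans with (delta0 * nn); [|apply Rmult_le_compat_r; lra].
    apply Rle_trans with (delta0 * (M0 / delta0)); [right; field; lra|apply Rmult_le_compat_l; lra]. }
  assert (Hl4 : 4 <= INR l).
  { assert (4 < 1 / eta').
    { apply (Rmult_lt_reg_r eta'); [lra|]. unfold Rdiv; rewrite Rmult_assoc, Rinv_l; lra. }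
    assert (INR 3 < INR l) by (simpl; lra). apply INR_lt in H0. apply (le_INR 4) in H0. simpl in H0. lra. }
  pose proof exp_le_3 as He3. pose proof exp1_ge2 as He2.
  assert (He1 : 1 / 3 <= exp (-1) <= 1 / 2).
  { replace (-1) with (- (1)) by ring. rewrite exp_Ropp. split.
    - apply (Rmult_le_reg_l (exp 1)); [lra|]. rewrite Rinv_r by lra. lra.
    - apply (Rmult_le_reg_l (exp 1)); [lra|]. rewrite Rinv_r by lra. lra. }
  assert (Hlam : 1 / 3 < lam < 3 / 4) by (unfold lam; lra).
  set (se := sqrt eta').
  assert (Hse : 0 < se /\ se * se = eta') by (split; [apply sqrt_lt_R0; lra|apply sqrt_sqrt; lra]).
  assert (Hse2 : se < 1 / 2) by nra.
  set (r := se / lam).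
  assert (Hr : 0 < r < 3 / 2).
  { unfold r. split; [apply Rdiv_lt_0_compat; lra|]. apply (Rmult_lt_reg_r lam); [lra|].
    unfold Rdiv; rewrite Rmult_assoc, Rinv_l; lra. }
  assert (Hrr : 16 * eta' / 9 <= r * r).
  { unfold r. replace (se / lam * (se / lam)) with ((se * se) / (lam * lam)) by (field; lra). rewrite (proj2 Hse).
    apply (Rmult_le_reg_r (lam * lam)); [nra|]. replace (eta' / (lam * lam) * (lam * lam)) with eta' by (field; lra).
    assert (lam * lam < 9 / 16) by nra. nra. }
  set (Y := fun i w => edge_weight W (v i) (v (S i)) w).
  assert (HYm : forall i t, (i < m)%nat -> F (fun w => Y i w <= t)) by (apply (path_meas n m F P W v Hiid Hpath)).
  assert (HYbox : forall lo hi, (forall i, (i < m)%nat -> 0 <= lo i <= hi i) ->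
     P (fun w => forall i, (i < m)%nat -> lo i < Y i w <= hi i) = prodR m (fun i => Fd nn (lo i) (hi i))).
  { apply (box_formula F P HP nn m Y HYm). apply (path_spec n m F P W v Hiid Hpath). }
  assert (Hnn2 : 2 <= nn) by lra.
  assert (HS : forall k w, path_S W v k w = sumR k (fun i => Y i w)) by reflexivity.
  set (q := 1 - 1 / (2 * M)).
  assert (Hq : 1 / 2 <= q < 1).
  { unfold q. assert (0 < 1 / (2 * M)) by (apply Rdiv_lt_0_compat; lra).
    assert (1 / (2 * M) <= 1 / 2) by (apply (Rmult_le_reg_r (2 * M)); [lra|]; unfold Rdiv; rewrite Rmult_assoc, Rinv_l by lra; nra). lra. }
  set (Dlow := exp (- (lam * M) / nn) * (lam * M * q / nn) ^ m / INR (fact m)).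
  assert (HDpos : 0 < Dlow).
  { unfold Dlow. apply Rdiv_lt_0_compat; [|apply lt_0_INR, lt_O_fact].
    apply Rmult_lt_0_compat; [apply exp_pos|apply pow_lt]. apply Rdiv_lt_0_compat; [|lra].
    apply Rmult_lt_0_compat; [|lra]. apply Rmult_lt_0_compat; lra. }
  assert (Hden : Dlow <= P (fun w => path_A W v m w <= lam)).
  { pose proof (L_bound F P HP Y m nn (lam / (2 * M)) HYm HYbox ltac:(lra) ltac:(apply Rdiv_lt_0_compat; lra)
                 m (Nat.le_refl m) (lam * M) (fun _ => 0) (fun _ => 0) ltac:(intros; lia)) as HL.
    unfold BP in HL. rewrite Nat.sub_diag in HL. simpl prodR in HL. rewrite Rmult_1_r in HL.
    unfold Psi in HL. fold M in HL. destruct (Rle_dec (M * (lam / (2 * M))) (lam * M)) as [C|C].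
    2:{ exfalso; apply C. replace (M * (lam / (2 * M))) with (lam / 2) by (field; lra). nra. }
    replace (exp (- (lam * M) / nn) * ((lam * M - M * (lam / (2 * M))) / nn) ^ m / INR (fact m)) with Dlow in HL.
    2:{ unfold Dlow, q. f_equal. f_equal. f_equal. field. lra. }
    eapply Rle_trans; [apply HL|]. right. apply P_ext. intro w. unfold Hs, Bx, path_A. rewrite HS.
    rewrite (sumR_ext m (fun i => 1 * Y i w) (fun i => Y i w)) by (intros; ring).
    split.
    - intros [X _]. apply (Rmult_le_reg_r M); [lra|]. unfold Rdiv. rewrite Rmult_assoc, Rinv_l by lra. lra.
    - intro X. split; [|intros; lia].
      apply (Rmult_le_compat_r M) in X; [|lra]. unfold Rdiv in X. rewrite Rmult_assoc, Rinv_l in X by lra. lra. }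
  assert (Hkh : forall k, (1 <= k)%nat -> INR k <= M / (2 * INR l) ->
             INR ((k - 1) * l) <= M / 2 /\ ((k - 1) * l <= m)%nat /\ (k < S m)%nat).
  { intros k Hk1 Hk2. assert (Hkl : INR k * INR l <= M / 2).
    { apply (Rmult_le_compat_r (INR l)) in Hk2; [|lra].
      replace (M / (2 * INR l) * INR l) with (M / 2) in Hk2 by (field; lra). auto. }
    rewrite mult_INR, minus_INR by auto. simpl INR at 2.
    assert (E : (INR k - 1) * INR l <= M / 2) by nra. split; auto. split.
    - apply INR_le. rewrite mult_INR, minus_INR by auto. simpl INR at 2. fold M. lra.
    - apply INR_lt. rewrite S_INR. fold M. assert (1 <= INR k) by (apply (le_INR 1); auto). nra. }
  assert (HmeasS : forall j, (j <= m)%nat -> measR F (fun w => sumR j (fun i => Y i w))).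
  { intros j Hj. apply (meas_sumR F P HP (fun i w => Y i w)). intros i Hi t. apply HYm. lia. }
  set (Num := fun w => event_E W v m l lam eta' w /\ path_A W v m w <= lam).
  assert (HNumF : F Num).
  { apply (F_and F P HP).
    - unfold event_E. apply (F_exists F P HP). intro k.
      apply (F_ext F (fun w => ((1 <= k)%nat /\ INR k <= INR m / (2 * INR l)) /\ Lambda W v m l k w > lam + sqrt eta')).
      { intro w; tauto. }
      apply (F_and_imp F P HP). intros [Hk1 Hk2]. fold M in Hk2. destruct (Hkh k Hk1 Hk2) as [Hh1 [Hh2 _]].
      set (h := ((k - 1) * l)%nat) in *.
      apply (F_ext F (fun w => lam + sqrt eta' < / (M - INR h) * (sumR m (fun i => Y i w) + -1 * sumR h (fun i => Y i w)))).
      { intro w. unfold Lambda. fold h. rewrite !HS. fold M. unfold Rdiv.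
        replace (/ (M - INR h) * (sumR m (fun i => Y i w) + -1 * sumR h (fun i => Y i w)))
          with ((sumR m (fun i => Y i w) - sumR h (fun i => Y i w)) * / (M - INR h)) by ring. tauto. }
      apply (meas_gt F P HP). apply (meas_scal F P HP). apply (meas_plus F P HP); [apply HmeasS; lia|].
      apply (meas_scal F P HP). apply HmeasS; auto.
    - unfold path_A. apply (F_ext F (fun w => / M * sumR m (fun i => Y i w) <= lam)).
      { intro w. rewrite HS. fold M. unfold Rdiv. rewrite Rmult_comm. tauto. }
      apply (meas_scal F P HP). apply HmeasS; auto. }
  set (alpha := 1 / lam - 1 / nn).
  set (beta := (r / (1 + r)) / lam).
  set (c := lam + se).
  assert (Hc : c = lam * (1 + r)) by (unfold c, r; field; lra).
  assert (Halpha : 0 < alpha - beta).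
  { unfold alpha, beta. replace (1 / lam - 1 / nn - r / (1 + r) / lam) with (1 / (lam * (1 + r)) - 1 / nn) by (field; lra).
    assert (lam * (1 + r) < 2) by (rewrite <- Hc; unfold c; lra).
    assert (1 / nn <= 1 / 2) by (apply (Rmult_le_reg_r (2 * nn)); [lra|]; unfold Rdiv; field_simplify; lra).
    assert (1 / 2 < 1 / (lam * (1 + r))).
    { apply (Rmult_lt_reg_r (2 * (lam * (1 + r)))); [nra|]. field_simplify; nra. }
    lra. }
  assert (Hbeta : 0 < beta) by (unfold beta; apply Rdiv_lt_0_compat; [apply Rdiv_lt_0_compat|]; lra).
  set (gam := fun h i => if Nat.ltb i h then alpha else alpha - beta).
  assert (Hgam : forall h i, 0 < gam h i) by (intros h i; unfold gam; destruct (Nat.ltb i h); lra).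
  set (Tk := fun h : nat => alpha * lam * M - beta * c * (M - INR h)).
  set (kcond := fun k => (1 <= k)%nat /\ INR k <= M / (2 * INR l)).
  set (piece := fun k w => kcond k /\ Hs Y (gam ((k - 1) * l)%nat) m (Tk ((k - 1) * l)%nat) w /\ Pos Y m w).
  assert (HpieceF : forall k, F (piece k)).
  { intro k. apply (F_and_imp F P HP). intros _. apply (F_ext F (fun w => Hs Y (gam ((k - 1) * l)%nat) m (Tk ((k - 1) * l)%nat) w /\ Pos Y m w /\ Bx Y m m (fun _ => 0) (fun _ => 0) w)).
    { intro w; unfold Bx; split; [tauto|]. intros [X1 X2]; repeat split; auto; lia. }
    apply (ev_meas F P HP); auto. }
  set (Neg := fun i w => (i < m)%nat /\ Y i w <= 0).
  assert (HNegF : forall i, F (Neg i)) by (intro i; apply (F_and_imp F P HP); intro; apply HYm; auto).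
  assert (Hincl : forall w, Num w -> (exists k, (k < S m)%nat /\ piece k w) \/ (exists i, (i < m)%nat /\ Neg i w)).
  { intros w [[k [Hk1 [Hk2 HL]]] HA]. fold M in Hk2.
    destruct (classic (exists i, (i < m)%nat /\ Neg i w)) as [X|X]; [right; auto|left].
    assert (Hpos : Pos Y m w).
    { intros i Hi. apply Rnot_le_lt. intro Y0. apply X. exists i. split; auto. split; auto. }
    destruct (Hkh k Hk1 Hk2) as [Hh1 [Hh2 Hh3]].
    exists k. split; auto. split; [split; auto|split; auto].
    set (h := ((k - 1) * l)%nat) in *.
    unfold Hs, gam, Tk.
    cbv beta.
    rewrite (sumR_if m h alpha (alpha - beta) (fun i => Y i w)). rewrite Nat.min_l by auto.
    unfold Lambda in HL. fold h in HL. rewrite !HS in HL. fold M in HL.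
    unfold path_A in HA. rewrite HS in HA. fold M in HA.
    set (Sm := sumR m (fun i => Y i w)) in *. set (Sh := sumR h (fun i => Y i w)) in *.
    assert (HMh : 0 < M - INR h) by lra.
    assert (H1 : c * (M - INR h) < Sm - Sh).
    { change (lam + sqrt eta') with c in HL. apply (Rmult_lt_compat_r (M - INR h)) in HL; auto.
      replace ((Sm - Sh) / (M - INR h) * (M - INR h)) with (Sm - Sh) in HL by (field; lra). lra. }
    assert (H2 : Sm <= lam * M).
    { apply (Rmult_le_compat_r M) in HA; [|lra].
      replace (Sm / M * M) with Sm in HA by (field; lra). lra. }
    assert (Hal : 0 < alpha) by lra.
    nra. }
  set (B := 4 * exp 1 * M * exp (- (r * r) * M / 16)).
  assert (HB : 0 < B) by (unfold B; pose proof (exp_pos (- (r * r) * M / 16)); apply Rmult_lt_0_compat; [|auto]; nra).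
  assert (Hpiece : forall k, P (piece k) <= Dlow * B).
  { intro k. destruct (classic (kcond k)) as [Hk|Hk].
    2:{ replace (P (piece k)) with (P (fun _ => False)) by (apply P_ext; unfold piece; tauto).
        rewrite (P_false F P HP). nra. }
    destruct Hk as [Hk1 Hk2]. destruct (Hkh k Hk1 Hk2) as [Hh1 [Hh2 _]].
    set (h := ((k - 1) * l)%nat) in *.
    set (eps := 1 / (2 * M)).
    assert (Heps : 0 < eps < 1).
    { unfold eps. split; [apply Rdiv_lt_0_compat; lra|]. apply (Rmult_lt_reg_r (2 * M)); [lra|].
      replace (1 / (2 * M) * (2 * M)) with 1 by (field; lra). lra. }
    pose proof (U_bound F P HP Y m nn (gam h) eps HYm HYbox ltac:(lra) (Hgam h) Heps m (Nat.le_refl m) (Tk h)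
                   (fun _ => 0) (fun _ => 0) ltac:(intros; lia)) as HU.
    unfold BP in HU. rewrite Nat.sub_diag in HU. simpl prodR in HU at 2. rewrite Rmult_1_r in HU.
    apply Rle_trans with (P (fun w => Hs Y (gam h) m (Tk h) w /\ Pos Y m w /\ Bx Y m m (fun _ => 0) (fun _ => 0) w)).
    { apply (P_mono F P HP); auto. apply (ev_meas F P HP); auto.
      intros w [_ [X1 X2]]. split; [auto|split; [auto|]]. unfold Bx; intros; lia. }
    eapply Rle_trans; [apply HU|]. clear HU.
    assert (Hq' : 1 - eps = q) by (unfold eps, q; ring).
    set (A := lam / (nn * q)).
    assert (HA : 0 < A) by (unfold A; apply Rdiv_lt_0_compat; nra).
    assert (Eprod : prodR m (fun i => / ((1 + gam h i * nn) * (1 - eps))) = A ^ m * (1 + r) ^ (m - h)).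
    { rewrite (prodR_ext m _ (fun i => if Nat.ltb i h then A else A * (1 + r))).
      - rewrite prodR_if, Nat.min_l by auto. rewrite Rpow_mult_distr, <- Rmult_assoc, <- pow_add.
        replace (h + (m - h))%nat with m by lia. ring.
      - intros i Hi. unfold gam. rewrite Hq'. destruct (Nat.ltb i h).
        + unfold alpha, A. field. split; lra.
        + unfold alpha, beta, A. field. repeat split; try lra. }
    assert (ET : exp (Tk h) = exp M * exp (- (lam * M) / nn) * exp (- r) ^ (m - h)).
    { rewrite <- exp_pow_INR, <- !exp_plus. f_equal. unfold Tk. rewrite minus_INR by auto. fold M.
      replace (beta * c) with r by (rewrite Hc; unfold beta; field; lra). unfold alpha. field. lra. }
    assert (ED : Dlow = exp (- (lam * M) / nn) * A ^ m * M ^ m * (q ^ m) ^ 2 / INR (fact m)).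
    { unfold Dlow. replace (lam * M * q / nn) with (A * (M * (q * q))) by (unfold A; field; lra).
      rewrite !Rpow_mult_distr. simpl pow at 4. field. apply INR_fact_neq_0. }
    rewrite Eprod, ET, ED.
    set (Z := exp (- (lam * M) / nn) * A ^ m).
    assert (HZ : 0 < Z) by (unfold Z; apply Rmult_lt_0_compat; [apply exp_pos|apply pow_lt; auto]).
    set (E16 := exp (- (r * r) * M / 16)).
    assert (HQ : (1 + r) ^ (m - h) * exp (- r) ^ (m - h) <= E16).
    { rewrite <- Rpow_mult_distr.
      apply Rle_trans with (exp (- (r * r) / 8) ^ (m - h)).
      - apply pow_incr. split; [apply Rmult_le_pos; [lra|left; apply exp_pos]|]. apply Qbound; lra.
      - rewrite <- exp_pow_INR. apply exp_mono_le. rewrite minus_INR by auto. fold M.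
        assert (0 <= r * r) by nra. nra. }
    assert (Hfact := fact_bound m Hm1). fold M in Hfact.
    assert (Hqm : 1 / 2 <= q ^ m).
    { unfold q. pose proof (bernoulli m (1 / (2 * M))) as Hb. fold M in Hb.
      replace (M * (1 / (2 * M))) with (1 / 2) in Hb by (field; lra). unfold eps in Heps. assert (HH : 0 <= 1 / (2 * M) <= 1) by lra. specialize (Hb HH). lra. }
    assert (Hf0 : 0 < INR (fact m)) by (apply lt_0_INR, lt_O_fact).
    assert (HMm : 0 < M ^ m) by (apply pow_lt; lra).
    assert (HE16 : 0 < E16) by apply exp_pos.
    assert (HeM : exp M * exp (- M) = 1) by (rewrite <- exp_plus; replace (M + - M) with 0 by ring; apply exp_0).
    assert (Hkey : exp M * ((1 + r) ^ (m - h) * exp (- r) ^ (m - h)) * INR (fact m) <= M ^ m * (q ^ m) ^ 2 * B).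
    { apply Rle_trans with (exp M * E16 * (exp 1 * M ^ S m * exp (- M))).
      - assert (0 <= (1 + r) ^ (m - h) * exp (- r) ^ (m - h)) by (apply Rmult_le_pos; apply pow_le; [lra|left; apply exp_pos]).
        pose proof (exp_pos M). apply Rmult_le_compat; try nra.
      - unfold B. fold E16. simpl pow. 
        assert (1 / 4 <= q ^ m * (q ^ m * 1)) by nra.
        replace (exp M * E16 * (exp 1 * (M * M ^ m) * exp (- M))) with ((exp M * exp (- M)) * (exp 1 * M * M ^ m * E16)) by ring.
        rewrite HeM. assert (0 < exp 1 * M * M ^ m * E16) by (apply Rmult_lt_0_compat; [apply Rmult_lt_0_compat; [nra|auto]|auto]).
        nra. }
    apply Rle_trans with (Z * (exp M * ((1 + r) ^ (m - h) * exp (- r) ^ (m - h)))).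
    { right. unfold Z. ring. }
    apply Rle_trans with (Z * (M ^ m * (q ^ m) ^ 2 / INR (fact m) * B)).
    2:{ right. unfold Z. field. lra. }
    apply Rmult_le_compat_l; [lra|].
    apply (Rmult_le_reg_r (INR (fact m))); auto.
    replace (M ^ m * (q ^ m) ^ 2 / INR (fact m) * B * INR (fact m)) with (M ^ m * (q ^ m) ^ 2 * B) by (field; lra).
    auto. }
  assert (Hnum : P Num <= INR (S m) * (Dlow * B)).
  { apply Rle_trans with (P (fun w => (exists k, (k < S m)%nat /\ piece k w) \/ (exists i, (i < m)%nat /\ Neg i w))).
    { apply (P_mono F P HP); auto. apply (F_or F P HP); apply (F_exists F P HP); intro; apply (F_and_const F P HP); auto. }
    eapply Rle_trans; [apply (P_subadd2 F P HP); apply (F_exists F P HP); intro; apply (F_and_const F P HP); auto|].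
    pose proof (P_union_le F P HP piece (S m) HpieceF) as U1.
    pose proof (P_union_le F P HP Neg m HNegF) as U2.
    assert (S1 : sumR (S m) (fun k => P (piece k)) <= sumR (S m) (fun _ => Dlow * B)) by (apply sumR_le; intros; auto).
    assert (S2 : sumR m (fun i => P (Neg i)) <= sumR m (fun _ => 0)).
    { apply sumR_le. intros i Hi. right. rewrite <- (path_pos0 n m F P W v Hiid Hpath i Hi).
      apply P_ext. intro w. unfold Neg, Y. tauto. }
    rewrite sumR_const in S1, S2. lra. }
  assert (HnumP : 0 <= P Num) by (apply (P_nonneg F P HP); auto).
  assert (Hfin : (M + 1) * B <= 2 * exp (- M * eta' / 16)).
  { set (a := (7 * eta' / 432) ^ 3).
    assert (Ha0 : 0 < a) by (unfold a; apply pow_lt; lra).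
    assert (Ha : a * M0 = 12).
    { unfold a, M0. replace ((7 * eta' / 432) ^ 3 * (12 * (432 / (7 * eta')) ^ 3))
        with (12 * ((7 * eta' / 432) * (432 / (7 * eta'))) ^ 3) by (rewrite Rpow_mult_distr; ring).
      replace (7 * eta' / 432 * (432 / (7 * eta'))) with 1 by (field; lra). ring. }
    assert (HaM : 12 <= a * M) by (rewrite <- Ha; apply Rmult_le_compat_l; lra).
    set (X := 7 * eta' * M / 144).
    assert (HX : a * M ^ 3 <= exp X).
    { eapply Rle_trans; [|apply exp_cube; unfold X; nra].
      right. unfold a, X. rewrite <- Rpow_mult_distr. f_equal. field. }
    assert (HE : exp (- (r * r) * M / 16) <= exp (- M * eta' / 16) * / exp X).
    { rewrite <- exp_Ropp, <- exp_plus. apply exp_mono_le. unfold X. nra. }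
    unfold B. pose proof (exp_pos X). pose proof (exp_pos (- M * eta' / 16)).
    assert (HM3 : (M + 1) * (4 * exp 1 * M) <= 2 * exp X).
    { apply Rle_trans with (24 * (M * M)); [nra|]. apply Rle_trans with (2 * (a * M ^ 3)); [|lra].
      simpl. nra. }
    apply Rle_trans with ((M + 1) * (4 * exp 1 * M) * (exp (- M * eta' / 16) * / exp X)).
    { replace ((M + 1) * (4 * exp 1 * M * exp (- (r * r) * M / 16))) with ((M + 1) * (4 * exp 1 * M) * exp (- (r * r) * M / 16)) by ring.
      apply Rmult_le_compat_l; [nra|auto]. }
    apply Rle_trans with (2 * exp X * (exp (- M * eta' / 16) * / exp X)).
    { apply Rmult_le_compat_r; auto. apply Rmult_le_pos; [lra|left; apply Rinv_0_lt_compat; auto]. }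
    right. field. lra. }
  change (P Num / P (fun w => path_A W v m w <= lam) <= 2 * nn * exp (- (delta * nn) * eta' / 16)).
  rewrite Hdm.
  apply Rle_trans with (P Num / Dlow).
  { unfold Rdiv. apply Rmult_le_compat_l; auto. apply Rinv_le_contravar; auto. }
  apply Rle_trans with ((M + 1) * B).
  { apply (Rmult_le_reg_r Dlow); auto. replace (P Num / Dlow * Dlow) with (P Num) by (field; lra).
    rewrite S_INR in Hnum. fold M in Hnum. lra. }
  eapply Rle_trans; [apply Hfin|]. pose proof (exp_pos (- M * eta' / 16)). nra.
Qed.
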